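(* Let $n\ge2$, and let $g_1(s),\dots,g_n(s)$, $f(s)$ be rational proper transfer functions. Suppose each $g_i$ is output strictly passive, i.e. there is $\epsilon>0$ with $\mathrm{Re}(g_i(s))\ge\epsilon|g_i(s)|^2$ for all $\mathrm{Re}(s)>0$ and all $i$, and $f$ is positive real, i.e. $\mathrm{Re}(f(s))\ge0$ for all $\mathrm{Re}(s)>0$. Then there exists $\gamma>0$ such that for every positive semidefinite matrix $L$ (real symmetric $n\times n$), $$\|\bar g\|_{\mathcal{H}_\infty}\le\gamma\quad\text{and}\quad\|T\|_{\mathcal{H}_\infty}\le\gamma,$$ where $T(s)=(I_n+\mathrm{diag}\{g_i(s)\}f(s)L)^{-1}\mathrm{diag}\{g_i(s)\}$ and $\bar g(s)=\big(\frac1n\sum_{i=1}^n g_i^{-1}(s)\big)^{-1}$.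
   Context: $\|H\|_{\mathcal{H}_\infty}=\sup_{\mathrm{Re}(s)>0}\|H(s)\|$ with $\|\cdot\|$ the spectral norm. *)

(* Defs.v *)
From HB Require Import structures.
From mathcomp Require Import all_boot all_order all_algebra.
From mathcomp Require Import all_classical all_reals.
From mathcomp Require Import complex.
Set Implicit Arguments. Unset Strict Implicit. Unset Printing Implicit Defensive.
Import Order.TTheory GRing.Theory Num.Theory.
Local Open Scope ring_scope.
Local Open Scope classical_set_scope.

Definition cmod (R : realType) (z : R[i]) : R :=
  Num.sqrt (complex.Re z ^+ 2 + complex.Im z ^+ 2).

Definition vnorm2 (R : realType) (n : nat) (v : 'cV[R[i]]_n) : R :=
  Num.sqrt (\sum_(i < n) cmod (v i 0) ^+ 2).

Definition spec_norm (R : realType) (m n : nat) (M : 'M[R[i]]_(m, n)) : R :=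
  sup [set vnorm2 (M *m v) | v in [set v : 'cV[R[i]]_n | vnorm2 v = 1]].

(* A rational transfer function with real coefficients, given by a
   numerator/denominator pair  (p, q)  representing  p(s)/q(s). *)
Definition tf (R : realType) := ({poly R} * {poly R})%type.

Definition rational_proper (R : realType) (g : tf R) : Prop :=
  [/\ g.2 != 0, coprimep g.1 g.2 & (size g.1 <= size g.2)%N].

Definition tf_den (R : realType) (g : tf R) (s : R[i]) : R[i] :=
  (map_poly (real_complex R) g.2).[s].
Definition tf_eval (R : realType) (g : tf R) (s : R[i]) : R[i] :=
  (map_poly (real_complex R) g.1).[s] / tf_den g s.

Definition tf_defined (R : realType) (g : tf R) (s : R[i]) : Prop :=
  tf_den g s != 0.

Definition OSP_with (R : realType) (eps : R) (g : tf R) : Prop :=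
  forall s : R[i], 0 < complex.Re s ->
    tf_defined g s /\ eps * cmod (tf_eval g s) ^+ 2 <= complex.Re (tf_eval g s).

Definition positive_real (R : realType) (f : tf R) : Prop :=
  forall s : R[i], 0 < complex.Re s -> tf_defined f s /\ 0 <= complex.Re (tf_eval f s).

Definition psd (R : realType) (n : nat) (L : 'M[R]_n) : Prop :=
  L^T = L /\ forall x : 'cV[R]_n, 0 <= (x^T *m L *m x) 0 0.

Definition Gdiag (R : realType) (n : nat) (g : 'I_n -> tf R) (s : R[i])
  : 'M[R[i]]_n := diag_mx (\row_i tf_eval (g i) s).

Definition return_diff (R : realType) (n : nat) (g : 'I_n -> tf R) (f : tf R)
  (L : 'M[R]_n) (s : R[i]) : 'M[R[i]]_n :=
  1%:M + Gdiag g s *m ((tf_eval f s) *: map_mx (real_complex R) L).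

Definition Tcl (R : realType) (n : nat) (g : 'I_n -> tf R) (f : tf R)
  (L : 'M[R]_n) (s : R[i]) : 'M[R[i]]_n :=
  invmx (return_diff g f L s) *m Gdiag g s.

Definition gbar (R : realType) (n : nat) (g : 'I_n -> tf R) (s : R[i]) : R[i] :=
  ((n%:R)^-1 * \sum_(i < n) (tf_eval (g i) s)^-1)^-1.

(* Main.v *)
Require Import Defs.
From HB Require Import structures.
From mathcomp Require Import all_boot all_order all_algebra.
From mathcomp Require Import all_classical all_reals.
From mathcomp Require Import complex.
From mathcomp Require Import ring lra.
Import Order.TTheory GRing.Theory Num.Theory.
Local Open Scope ring_scope.

Section H.
Variable R : realType.

Lemma cmod2 (z : R[i]) : cmod z ^+ 2 = complex.Re z ^+ 2 + complex.Im z ^+ 2.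
Proof. by rewrite /cmod sqr_sqrtr // addr_ge0 // sqr_ge0. Qed.

Lemma cReD (x y : R[i]) : complex.Re (x + y) = complex.Re x + complex.Re y.
Proof. by case: x; case: y. Qed.
Lemma cImD (x y : R[i]) : complex.Im (x + y) = complex.Im x + complex.Im y.
Proof. by case: x; case: y. Qed.
Lemma cReB (x y : R[i]) : complex.Re (x - y) = complex.Re x - complex.Re y.
Proof. by case: x; case: y. Qed.
Lemma cImB (x y : R[i]) : complex.Im (x - y) = complex.Im x - complex.Im y.
Proof. by case: x; case: y. Qed.
Lemma cReM (x y : R[i]) : complex.Re (x * y) = complex.Re x * complex.Re y - complex.Im x * complex.Im y.
Proof. by case: x; case: y. Qed.
Lemma cImM (x y : R[i]) : complex.Im (x * y) = complex.Re x * complex.Im y + complex.Im x * complex.Re y.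
Proof. by case: x => a b; case: y => c d /=. Qed.
Lemma cReC (x : R) : complex.Re (real_complex R x) = x. Proof. by []. Qed.
Lemma cImC (x : R) : complex.Im (real_complex R x) = 0. Proof. by []. Qed.

Lemma cRe_sum (I : Type) (r : seq I) (P : pred I) (F : I -> R[i]) :
  complex.Re (\sum_(i <- r | P i) F i) = \sum_(i <- r | P i) complex.Re (F i).
Proof. by elim/big_rec2: _ => // i y1 y2 _ <-; rewrite cReD. Qed.
Lemma cIm_sum (I : Type) (r : seq I) (P : pred I) (F : I -> R[i]) :
  complex.Im (\sum_(i <- r | P i) F i) = \sum_(i <- r | P i) complex.Im (F i).
Proof. by elim/big_rec2: _ => // i y1 y2 _ <-; rewrite cImD. Qed.

Lemma comp_ineq (eps : R) (g y : R[i]) :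
  eps * cmod g ^+ 2 <= complex.Re g ->
  eps * (complex.Re (g * y) ^+ 2 + complex.Im (g * y) ^+ 2) <=
  complex.Re y * complex.Re (g * y) + complex.Im y * complex.Im (g * y).
Proof.
rewrite cmod2 cReM cImM; case: g => a b; case: y => c d /= H.
have h0 : 0 <= c ^+ 2 + d ^+ 2 by rewrite addr_ge0 // sqr_ge0.
have := ler_wpM2r h0 H.
have -> : eps * ((a * c - b * d) ^+ 2 + (a * d + b * c) ^+ 2) = eps * (a ^+ 2 + b ^+ 2) * (c ^+ 2 + d ^+ 2) by ring.
by have -> : c * (a * c - b * d) + d * (a * d + b * c) = a * (c ^+ 2 + d ^+ 2) by ring.
Qed.

Lemma amgm (eps a b c d : R) : 0 < eps ->
  2 * eps * (a * c + b * d) <= eps ^+ 2 * (c ^+ 2 + d ^+ 2) + (a ^+ 2 + b ^+ 2).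
Proof.
move=> _; have h1 := sqr_ge0 (eps * c - a); have h2 := sqr_ge0 (eps * d - b).
nra.
Qed.
End H.

Section H2.
Variable R : realType.
Variable n : nat.
Variable L : 'M[R]_n.
Hypothesis hL : psd L.

Lemma quad_sym (a b : 'cV[R]_n) :
  \sum_i (L *m a) i 0 * b i 0 = \sum_i (L *m b) i 0 * a i 0.
Proof.
case: hL => hT _.
have hs : forall i j, L i j = L j i.
  by move=> i j; rewrite -{1}hT mxE.
under eq_bigr => i _ do rewrite mxE mulr_suml.
under [RHS]eq_bigr => i _ do rewrite mxE mulr_suml.
rewrite exchange_big /=; apply: eq_bigr => i _; apply: eq_bigr => j _.
by rewrite hs; ring.
Qed.

Lemma quad_ge0 (a : 'cV[R]_n) : 0 <= \sum_i (L *m a) i 0 * a i 0.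
Proof.
case: hL => _ hp; have := hp a.
rewrite -mulmxA mxE => h; apply: (le_trans h); rewrite le_eqVlt; apply/orP; left.
by apply/eqP; apply: eq_bigr => i _; rewrite mxE mulrC.
Qed.

Definition rcol (u : 'cV[R[i]]_n) : 'cV[R]_n := \col_j complex.Re (u j 0).
Definition icol (u : 'cV[R[i]]_n) : 'cV[R]_n := \col_j complex.Im (u j 0).

Lemma Re_Lc (u : 'cV[R[i]]_n) i :
  complex.Re ((map_mx (real_complex R) L *m u) i 0) = (L *m rcol u) i 0.
Proof.
rewrite !mxE cRe_sum; apply: eq_bigr => j _; rewrite !mxE; case: (u j 0) => a b /=; ring.
Qed.
Lemma Im_Lc (u : 'cV[R[i]]_n) i :
  complex.Im ((map_mx (real_complex R) L *m u) i 0) = (L *m icol u) i 0.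
Proof.
rewrite !mxE cIm_sum; apply: eq_bigr => j _; rewrite !mxE; case: (u j 0) => a b /=; ring.
Qed.

Lemma pos_part (F : R[i]) (u : 'cV[R[i]]_n) : 0 <= complex.Re F ->
  0 <= \sum_i (complex.Re (F * (map_mx (real_complex R) L *m u) i 0) * complex.Re (u i 0)
             + complex.Im (F * (map_mx (real_complex R) L *m u) i 0) * complex.Im (u i 0)).
Proof.
move=> hF.
have -> : \sum_i (complex.Re (F * (map_mx (real_complex R) L *m u) i 0) * complex.Re (u i 0)
             + complex.Im (F * (map_mx (real_complex R) L *m u) i 0) * complex.Im (u i 0))
  = complex.Re F * (\sum_i (L *m rcol u) i 0 * rcol u i 0 + \sum_i (L *m icol u) i 0 * icol u i 0)
  + complex.Im F * (\sum_i (L *m rcol u) i 0 * icol u i 0 - \sum_i (L *m icol u) i 0 * rcol u i 0).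
  rewrite -sumrB -big_split /= !mulr_sumr -big_split /=; apply: eq_bigr => i _.
  rewrite cReM cImM Re_Lc Im_Lc !mxE; ring.
rewrite (quad_sym (rcol u)) subrr mulr0 addr0.
by rewrite mulr_ge0 // addr_ge0 // quad_ge0.
Qed.
End H2.

Section H3.
Variable R : realType.
Variable n : nat.
Variable g : 'I_n -> tf R.
Variable f : tf R.
Variable L : 'M[R]_n.
Hypothesis hL : psd L.
Variable s : R[i].
Variable eps : R.
Hypothesis heps : 0 < eps.
Hypothesis hg : forall i, eps * cmod (tf_eval (g i) s) ^+ 2 <= complex.Re (tf_eval (g i) s).
Hypothesis hf : 0 <= complex.Re (tf_eval f s).

Definition Ssq (u : 'cV[R[i]]_n) : R := \sum_i cmod (u i 0) ^+ 2.

Lemma core (u v : 'cV[R[i]]_n) :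
  return_diff g f L s *m u = Gdiag g s *m v ->
  eps * Ssq u <= \sum_i (complex.Re (v i 0) * complex.Re (u i 0) + complex.Im (v i 0) * complex.Im (u i 0)).
Proof.
set F := tf_eval f s; set Lc := map_mx (real_complex R) L.
rewrite /return_diff mulmxDl mul1mx => H.
have hu : u = Gdiag g s *m (v - F *: (Lc *m u)).
  transitivity (Gdiag g s *m v - Gdiag g s *m (F *: Lc) *m u); first by rewrite -H addrK.
  by rewrite -mulmxA -scalemxAl mulmxBr.
have hc : forall i, u i 0 = tf_eval (g i) s * (v i 0 - F * (Lc *m u) i 0).
  move=> i; rewrite {1}hu /Gdiag mul_diag_mx !mxE.
  done.
rewrite /Ssq mulr_sumr.
apply: (le_trans (y := \sum_i (complex.Re (v i 0 - F * (Lc *m u) i 0) * complex.Re (u i 0)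
   + complex.Im (v i 0 - F * (Lc *m u) i 0) * complex.Im (u i 0)))).
  apply: ler_sum => i _; rewrite cmod2.
  have := @comp_ineq R eps _ (v i 0 - F * (Lc *m u) i 0) (hg i).
  by rewrite -hc.
under eq_bigr => i _ do rewrite cReB cImB.
have -> : \sum_i ((complex.Re (v i 0) - complex.Re (F * (Lc *m u) i 0)) * complex.Re (u i 0) +
    (complex.Im (v i 0) - complex.Im (F * (Lc *m u) i 0)) * complex.Im (u i 0))
  = \sum_i (complex.Re (v i 0) * complex.Re (u i 0) + complex.Im (v i 0) * complex.Im (u i 0))
  - \sum_i (complex.Re (F * (Lc *m u) i 0) * complex.Re (u i 0) + complex.Im (F * (Lc *m u) i 0) * complex.Im (u i 0)).
  by rewrite -sumrB; apply: eq_bigr => i _; ring.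
by rewrite lerBlDr lerDl; apply: pos_part.
Qed.

Lemma Ssq_ge0 u : 0 <= Ssq u.
Proof. by apply: sumr_ge0 => i _; rewrite sqr_ge0. Qed.

Lemma bound (u v : 'cV[R[i]]_n) :
  return_diff g f L s *m u = Gdiag g s *m v -> eps ^+ 2 * Ssq u <= Ssq v.
Proof.
move=> H; have h1 := @core u v H.
set D := \sum_i _ in h1.
have h2 : 2 * eps * D <= eps ^+ 2 * Ssq u + Ssq v.
  rewrite /D /Ssq mulr_sumr mulr_sumr -big_split /=; apply: ler_sum => i _.
  by rewrite !cmod2; apply: amgm.
have h3 := Ssq_ge0 u.
have h4 : 2 * eps * (eps * Ssq u) <= 2 * eps * D by rewrite ler_wpM2l // mulr_ge0 // ltW.
nra.
Qed.

End H3.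

Lemma cmod_normc (R : realType) (z : R[i]) : cmod z = ComplexField.Normc.normc z.
Proof. by case: z. Qed.

Lemma Re_inv_ge (R : realType) (eps : R) (z : R[i]) : z != 0 ->
  eps * cmod z ^+ 2 <= complex.Re z -> eps <= complex.Re (z^-1).
Proof.
rewrite cmod2; case: z => a b hz /= H.
have hp : 0 < a ^+ 2 + b ^+ 2.
  rewrite lt_neqAle addr_ge0 ?sqr_ge0 // andbT eq_sym.
  apply: contra hz; rewrite paddr_eq0 ?sqr_ge0 // !sqrf_eq0 => /andP[/eqP -> /eqP ->].
  by [].
by rewrite ler_pdivlMr.
Qed.

Lemma Re_scaleC (R : realType) (c : R) (w : R[i]) :
  complex.Re (real_complex R c * w) = c * complex.Re w.
Proof. by case: w => a b /=; ring. Qed.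

Lemma gbar_bound (R : realType) (n : nat) (g : 'I_n -> tf R) (s : R[i]) (eps : R) :
  (0 < n)%N -> 0 < eps ->
  (forall i, eps * cmod (tf_eval (g i) s) ^+ 2 <= complex.Re (tf_eval (g i) s)) ->
  (forall i, tf_eval (g i) s != 0) -> cmod (gbar g s) <= eps^-1.
Proof.
move=> hn he hg hnz.
set z := ((n%:R)^-1 * \sum_(i < n) (tf_eval (g i) s)^-1).
have hz : eps <= complex.Re z.
  rewrite /z -(rmorph_nat (real_complex R)) -fmorphV Re_scaleC cRe_sum.
  have hn0 : (0 : R) < n%:R by rewrite ltr0n.
  rewrite ler_pdivlMl //.
  have -> : n%:R * eps = \sum_(i < n) eps by rewrite sumr_const card_ord mulr_natl.
  by apply: ler_sum => i _; apply: Re_inv_ge.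
have hzn : eps <= ComplexField.Normc.normc z.
  apply: (le_trans hz); rewrite -cmod_normc /cmod.
  have h0 : 0 <= complex.Re z by apply: le_trans hz; apply: ltW.
  have e : complex.Re z = Num.sqrt (complex.Re z ^+ 2) by rewrite sqrtr_sqr ger0_norm.
  rewrite {1}e.
  by apply: ler_wsqrtr; rewrite lerDl sqr_ge0.
rewrite /gbar -/z cmod_normc ComplexField.Normc.normcV.
have hp : 0 < ComplexField.Normc.normc z by apply: lt_le_trans hzn.
by rewrite lef_pV2 // posrE.
Qed.

Lemma ker_unit (C : fieldType) (n : nat) (A : 'M[C]_n) :
  (forall w : 'cV[C]_n, A *m w = 0 -> w = 0) -> A \in unitmx.
Proof.
move=> hw; rewrite -unitmx_tr -row_free_unit -kermx_eq0.
set K := kermx A^T.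
have hK : K *m A^T = 0 by apply: mulmx_ker.
apply/eqP/matrixP => i j; rewrite mxE.
have h : A *m (row i K)^T = 0.
  by rewrite -[A]trmxK -trmx_mul -row_mul hK row0 trmx0.
have := hw _ h => /matrixP /(_ j 0); rewrite !mxE => ->.
by [].
Qed.

Lemma Ssq0 (R : realType) (n : nat) : Ssq R n 0 = 0.
Proof.
rewrite /Ssq big1 // => i _; rewrite mxE /cmod /=.
by rewrite expr0n /= addr0 sqrtr0 expr0n.
Qed.

Lemma Ssq_eq0 (R : realType) (n : nat) (u : 'cV[R[i]]_n) : Ssq R n u <= 0 -> u = 0.
Proof.
move=> h.
have h0 : Ssq R n u = 0 by apply/eqP; rewrite eq_le h Ssq_ge0.
apply/matrixP => i j; rewrite (ord1 j) mxE.
have := psumr_eq0P (fun i _ => sqr_ge0 (cmod (u i 0))) h0 (i:=i) isT.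
rewrite cmod2; case: (u i 0) => a b /= /eqP.
rewrite paddr_eq0 ?sqr_ge0 // !sqrf_eq0 => /andP[/eqP -> /eqP ->].
by [].
Qed.

Theorem theorem4 (R : realType) (n : nat) (g : 'I_n -> tf R) (f : tf R) :
  (2 <= n)%N ->
  (forall i, rational_proper (g i)) -> rational_proper f ->
  (exists2 eps : R, 0 < eps & forall i, OSP_with eps (g i)) ->
  positive_real f ->
  exists2 gamma : R, 0 < gamma &
    forall L : 'M[R]_n, psd L ->
      (forall s : R[i], 0 < complex.Re s ->
         (forall i, tf_eval (g i) s != 0) -> cmod (gbar g s) <= gamma) /\
      (forall s : R[i], 0 < complex.Re s ->
         return_diff g f L s \in unitmx /\ spec_norm (Tcl g f L s) <= gamma).
Proof.
move=> hn _ _ [eps he hosp] hpr.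
exists eps^-1; first by rewrite invr_gt0.
move=> L hL; split.
  move=> s hs hnz; apply: gbar_bound => //.
    by apply: leq_trans hn.
  by move=> i; case: (hosp i s hs).
move=> s hs.
have hg : forall i, eps * cmod (tf_eval (g i) s) ^+ 2 <= complex.Re (tf_eval (g i) s).
  by move=> i; case: (hosp i s hs).
have hf : 0 <= complex.Re (tf_eval f s) by case: (hpr s hs).
have hU : return_diff g f L s \in unitmx.
  apply: ker_unit => w hw.
  apply: Ssq_eq0.
  have := @bound R n g f L hL s eps he hg hf w 0.
  rewrite mulmx0 Ssq0 => /(_ hw) h.
  by rewrite -(pmulr_rle0 _ (exprn_gt0 2 he)).
split => //.
rewrite /spec_norm; set E := (X in sup X).
have [ne|e0] := pselect (E !=set0)%classic; last first.
  have -> : E = set0.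
    by apply/seteqP; split => x // Ex; apply: e0; exists x.
  by rewrite sup0 ltW // invr_gt0.
apply: ge_sup => // _ [v hv <-].
set u := Tcl g f L s *m v.
have hAu : return_diff g f L s *m u = Gdiag g s *m v.
  by rewrite /u /Tcl !mulmxA mulmxV // mul1mx.
have hb := @bound R n g f L hL s eps he hg hf u v hAu.
have hSv : Ssq R n v = 1.
  have hv' : Num.sqrt (Ssq R n v) = 1 := hv.
  by have := sqr_sqrtr (Ssq_ge0 R n v); rewrite hv' expr1n.
rewrite hSv in hb.
have hx0 : 0 <= vnorm2 u by apply: sqrtr_ge0.
have hx2 : vnorm2 u ^+ 2 = Ssq R n u by rewrite /vnorm2 sqr_sqrtr // (Ssq_ge0 R n u).
rewrite -hx2 in hb.
rewrite -(ler_pM2l he) mulfV ?gt_eqF //.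
nra.
Qed.
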